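(* Under the hypotheses and notation below, fix $\epsilon>0$ and define $$\Gamma_N^{\epsilon}(\mathcal{K}^* )=\{z\in\mathrm{Grid}(N):\ \sigma_{\inf}((\mathcal{K}^*-zI)\mathcal{P}_N^* )<\epsilon\}.$$ Then $\Gamma_N^{\epsilon}(\mathcal{K}^* )\subset\mathrm{Sp}_{\mathrm{ap},\epsilon}(\mathcal{K}^* )$ for every $N\in\mathbb{N}$, and $\Gamma_N^{\epsilon}(\mathcal{K}^* )\to\mathrm{Sp}_{\mathrm{ap},\epsilon}(\mathcal{K}^* )$ in the Attouch–Wets sense as $N\to\infty$.
   Context: $\mathcal{H}$ is a reproducing kernel Hilbert space (RKHS) of complex-valued functions on a set $\mathcal{X}$ with reproducing kernel $\mathfrak{K}$, inner product $\langle\cdot,\cdot\rangle$ and norm $\|\cdot\|$; $\mathfrak{K}_x$ is the kernel function at $x$ ($g(x)=\langle g,\mathfrak{K}_x\rangle$). For $F:\mathcal{X}\to\mathcal{X}$ the Koopman operator $\mathcal{K}g=g\circ F$ has domain $\{g\in\mathcal{H}:g\circ F\in\mathcal{H}\}$ and is closed; assume it is densely defined, and let $\mathcal{K}^*$ be its adjoint (then $\mathcal{K}^*\mathfrak{K}_x=\mathfrak{K}_{F(x)}$). Let $\mathfrak{K}_1,\mathfrak{K}_2,\dots$ be a countable family of kernel functions whose span is a core of $\mathcal{K}^*$, $V_N=\mathrm{span}\{\mathfrak{K}_1,\dots,\mathfrak{K}_N\}$, $\mathcal{P}_N$ the orthogonal projection onto $V_N$ and $\mathcal{P}_N^*$ the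 inclusion of $V_N$ into $\mathcal{H}$. Injection modulus: $\sigma_{\inf}(T)=\inf\{\|Tg\|/\|g\|:0\neq g\in\mathcal{D}(T)\}$. Approximate point $\epsilon$-pseudospectrum: $\mathrm{Sp}_{\mathrm{ap},\epsilon}(T)=\overline{\{z\in\mathbb{C}:\sigma_{\inf}(T-zI)<\epsilon\}}$. $\mathrm{Grid}(N)=\frac1N(\mathbb{Z}+i\mathbb{Z})\cap\{z:|z|\le N\}$. Attouch–Wets convergence of closed sets $C_n\to C$: if $C=\emptyset$, this means that for every $m\in\mathbb{N}$, $C_n\cap B_m(0)=\emptyset$ for all large $n$; if $C\ne\emptyset$, it means $C_n\neq\emptyset$ for large $n$ and $d_{\mathrm{AW}}(C_n,C)\to0$, where $d_{\mathrm{AW}}(X,Y)=\sum_{m\ge1}2^{-m}\min\{1,\sup_{x\in B_m(0)}|\mathrm{dist}(x,X)-\mathrm{dist}(x,Y)|\}$ and $B_m(0)$ is the closed ball of radius $m$ about $0$; equivalently, for every $\delta>0$ and compact $K\subset\mathbb{C}$, eventually $C_n\cap K\subset C+B_\delta(0)$ and $C\cap K\subset C_n+B_\delta(0)$. *)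

(* Defs.v *)
From mathcomp Require Import all_boot all_order all_algebra.
From mathcomp Require Import complex.
From mathcomp Require Import boolp classical_sets reals constructive_ereal ereal.
Set Implicit Arguments. Unset Strict Implicit. Unset Printing Implicit Defensive.
Import Order.TTheory GRing.Theory Num.Theory.
Local Open Scope ring_scope.
Local Open Scope classical_set_scope.

Section RKHSDefs.
Variables (R : realType) (X : Type).
Local Notation C := R[i].
Local Notation fn := (X -> C).

Definition fzero : fn := fun _ => 0.
Definition fadd (f g : fn) : fn := fun x => f x + g x.
Definition fscale (a : C) (f : fn) : fn := fun x => a * f x.
Definition fsub (f g : fn) : fn := fun x => f x - g x.

(* (H, ip) is a complex Hilbert space of functions X -> C (inner product
   linear in the first argument, conjugate symmetric, positive definite,
   complete), and it is a reproducing kernel Hilbert space whose kernel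
   function at x is kf x (i.e. kf x = K_x, K(y,x) = kf x y):
   K_x \in H and g x = <g, K_x> for all g \in H. *)
Definition hnorm (ip : fn -> fn -> C) (f : fn) : R := Num.sqrt (@complex.Re R (ip f f)).

Record is_RKHS (H : set fn) (ip : fn -> fn -> C) (kf : X -> fn) : Prop := {
  rk_zero : H fzero;
  rk_add : forall f g, H f -> H g -> H (fadd f g);
  rk_scale : forall a f, H f -> H (fscale a f);
  rk_ipD : forall f g h, H f -> H g -> H h -> ip (fadd f g) h = ip f h + ip g h;
  rk_ipZ : forall a f h, H f -> H h -> ip (fscale a f) h = a * ip f h;
  rk_ipC : forall f g, H f -> H g -> ip g f = Num.conj (ip f g);
  rk_ip_ge0 : forall f, H f -> 0 <= ip f f;
  rk_ip_eq0 : forall f, H f -> ip f f = 0 -> f = fzero;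
  rk_complete : forall u : nat -> fn, (forall n, H (u n)) ->
     (forall e : R, 0 < e -> exists N, forall m n, (N <= m)%N -> (N <= n)%N ->
         hnorm ip (fsub (u m) (u n)) < e) ->
     exists g, H g /\ forall e : R, 0 < e -> exists N, forall n, (N <= n)%N ->
         hnorm ip (fsub (u n) g) < e;
  rk_kernel : forall x, H (kf x);
  rk_reproducing : forall x g, H g -> g x = ip g (kf x) }.

(* Koopman operator K g = g o F, domain {g in H | g o F in H} *)
Definition koopman_dom (H : set fn) (F : X -> X) : set fn :=
  [set g | H g /\ H (g \o F)].

Definition densely_defined (H : set fn) (ip : fn -> fn -> C) (D : set fn) : Prop :=
  forall g, H g -> forall e : R, 0 < e -> exists d, D d /\ hnorm ip (fsub g d) < e.

(* graph of the adjoint K^* : (h, w) is in the graph iff h \in H and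
   <K g, h> = <g, w> for all g in D(K), with w \in H. *)
Definition koopman_adj (H : set fn) (ip : fn -> fn -> C) (F : X -> X)
  (h w : fn) : Prop :=
  [/\ H h, H w & forall g, koopman_dom H F g -> ip (g \o F) h = ip g w].

(* V_N = span {K_{x_0}, ..., K_{x_(N-1)}} (the paper's K_1, ..., K_N) *)
Definition spanN (kf : X -> fn) (xs : nat -> X) (N : nat) : set fn :=
  [set v | exists c : nat -> C, v = fun y => \sum_(j < N) c j * kf (xs j) y].

Definition span_all (kf : X -> fn) (xs : nat -> X) : set fn :=
  [set v | exists N, spanN kf xs N v].

Definition is_core_adj (H : set fn) (ip : fn -> fn -> C) (F : X -> X)
  (S : set fn) : Prop :=
  (forall v, S v -> exists w, koopman_adj H ip F v w) /\
  (forall h w, koopman_adj H ip F h w -> forall e : R, 0 < e ->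
     exists v u, [/\ S v, koopman_adj H ip F v u,
                     hnorm ip (fsub v h) < e & hnorm ip (fsub u w) < e]).

(* injection modulus of (K^* - z I) restricted to a subset S of the domain of K^*:
   inf { ||(K^* - z) v|| / ||v|| : 0 <> v in S }  (inf of empty set = +oo) *)
Definition sigma_inf_on (H : set fn) (ip : fn -> fn -> C) (F : X -> X)
  (S : set fn) (z : C) : \bar R :=
  ereal_inf [set t | exists v w, [/\ S v, v <> fzero, koopman_adj H ip F v w &
     t = (hnorm ip (fsub w (fscale z v)) / hnorm ip v)%:E]].

Definition grid (N : nat) : set C :=
  [set z | exists a b : int, z = (a%:~R + b%:~R * 'i) / N%:R /\ `|z| <= N%:R].

Definition cclosure (S : set C) : set C :=
  [set z | forall d : R, 0 < d -> exists w, S w /\ `|z - w| < (d%:C)%C].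

Definition Sp_ap_adj (H : set fn) (ip : fn -> fn -> C) (F : X -> X) (eps : R)
  : set C :=
  cclosure [set z | (sigma_inf_on H ip F setT z < eps%:E)%E].

Definition Gamma_adj (H : set fn) (ip : fn -> fn -> C) (kf : X -> fn)
  (F : X -> X) (xs : nat -> X) (eps : R) (N : nat) : set C :=
  [set z | grid N z /\ (sigma_inf_on H ip F (spanN kf xs N) z < eps%:E)%E].

End RKHSDefs.

(* Attouch--Wets convergence of sets Cn -> S in C, in the equivalent
   "local Hausdorff" form: for every delta > 0 and every bounded region
   (closed ball B_m(0), m in N), eventually Cn n /\ B_m(0) is within delta of S
   and S /\ B_m(0) is within delta of Cn n.  (Covers the case S = empty.) *)
Definition within_of (R : realType) (d : R) (m : nat) (A B : set R[i]) : Prop :=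
  forall z, A z -> `|z| <= m%:R -> exists w, B w /\ `|z - w| <= (d%:C)%C.

Definition AW_converges (R : realType) (Cn : nat -> set R[i]) (S : set R[i]) : Prop :=
  forall (d : R) (m : nat), 0 < d -> exists N0, forall n, (N0 <= n)%N ->
    within_of d m (Cn n) S /\ within_of d m S (Cn n).

(* Main.v *)
Require Import Defs.
From mathcomp Require Import all_boot all_order all_algebra.
From mathcomp Require Import complex.
From mathcomp Require Import boolp classical_sets reals constructive_ereal ereal.
From mathcomp Require Import ring lra zify archimedean.
Import Order.TTheory GRing.Theory Num.Theory.
Local Open Scope ring_scope.
Local Open Scope classical_set_scope.
Set Implicit Arguments. Unset Strict Implicit.

Section Hilb.
Local Open Scope complex_scope.
Variables (R : realType) (X : Type) (H : set (X -> R[i]))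
  (ip : (X -> R[i]) -> (X -> R[i]) -> R[i]) (kf : X -> X -> R[i]).
Hypothesis RK : is_RKHS H ip kf.

Lemma conjE (x : R[i]) : Num.conj x = conjc x.
Proof.
have [->|x0] := eqVneq x 0; first by rewrite conjC0 conjc0.
by apply: (mulfI x0); rewrite -normCK sqr_normc.
Qed.

Definition nq f : R := @complex.Re R (ip f f).

Lemma ipff f : H f -> ip f f = (nq f)%:C.
Proof.
move=> Hf; have := rk_ip_ge0 RK Hf; rewrite /nq.
case: (ip f f) => a b; rewrite lecE => /andP[/eqP hb _].
by move: hb => /= ->.
Qed.

Lemma nq_ge0 f : H f -> 0 <= nq f.
Proof. by move=> Hf; have := rk_ip_ge0 RK Hf; rewrite lecE /nq => /andP[]. Qed.

Lemma ipDr f g h : H f -> H g -> H h -> ip f (fadd g h) = ip f g + ip f h.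
Proof.
move=> Hf Hg Hh.
rewrite (rk_ipC RK (rk_add RK Hg Hh) Hf) (rk_ipD RK Hg Hh Hf) rmorphD.
by rewrite (rk_ipC RK Hg Hf) (rk_ipC RK Hh Hf).
Qed.

Lemma ipZr a f h : H f -> H h -> ip f (fscale a h) = conjc a * ip f h.
Proof.
move=> Hf Hh.
rewrite (rk_ipC RK (rk_scale RK a Hh) Hf) (rk_ipZ RK a Hh Hf) rmorphM.
by rewrite (rk_ipC RK Hh Hf) conjE.
Qed.

Lemma ipJ f g : H f -> H g -> ip g f = conjc (ip f g).
Proof. by move=> Hf Hg; rewrite (rk_ipC RK Hf Hg) conjE. Qed.

Lemma nq_lin f g (t : R) : H f -> H g ->
  nq (fadd f (fscale t%:C g)) = nq f + 2 * t * @complex.Re R (ip f g) + t ^+ 2 * nq g.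
Proof.
move=> Hf Hg.
have Htg := rk_scale RK t%:C Hg.
rewrite /nq (rk_ipD RK Hf Htg (rk_add RK Hf Htg)) (rk_ipZ RK _ Hg (rk_add RK Hf Htg)).
rewrite (ipDr Hf Hf Htg) (ipDr Hg Hf Htg) (ipZr _ Hf Hg) (ipZr _ Hg Hg).
rewrite (ipJ Hf Hg) (ipff Hf) (ipff Hg).
case: (ip f g) => a b /=.
ring.
Qed.


Lemma hnormE f : hnorm ip f = Num.sqrt (nq f). Proof. by []. Qed.

Lemma Re_ip_le f g : H f -> H g -> @complex.Re R (ip f g) <= hnorm ip f * hnorm ip g.
Proof.
move=> Hf Hg.
set a := complex.Re _; set p := nq f; set q := nq g.
have Q t : 0 <= p + 2 * t * a + t ^+ 2 * q.
  rewrite -nq_lin //; apply: nq_ge0; exact: (rk_add RK Hf (rk_scale RK _ Hg)).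
have p0 : 0 <= p := nq_ge0 Hf. have q0 : 0 <= q := nq_ge0 Hg.
have [a0|a0] := lerP a 0.
  by apply: le_trans a0 _; rewrite mulr_ge0 ?sqrtr_ge0.
suff : a ^+ 2 <= p * q.
  move=> h; rewrite !hnormE -sqrtrM // -(ger0_norm (ltW a0)) -sqrtr_sqr.
  exact: ler_wsqrtr.
have [q00|q0'] := eqVneq q 0.
  have := Q (-(p+1)/(2*a)); rewrite q00 mulr0 addr0.
  have -> : p + 2 * (- (p + 1) / (2 * a)) * a = -1.
    by field; rewrite gt_eqF.
  lra.
have qp : 0 < q by rewrite lt_def q0' q0.
have := Q (-a/q).
have -> : p + 2 * (- a / q) * a + (- a / q) ^+ 2 * q = p - a ^+ 2 / q by field.
rewrite subr_ge0 ler_pdivrMr //.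
Qed.

Lemma nq_add f g : H f -> H g -> nq (fadd f g) = nq f + 2 * @complex.Re R (ip f g) + nq g.
Proof.
move=> Hf Hg; have -> : fadd f g = fadd f (fscale 1%:C g).
  by apply: funext => x; rewrite /fadd /fscale mul1r.
by rewrite nq_lin // expr1n mul1r mulr1.
Qed.

Lemma hnorm_ge0 f : 0 <= hnorm ip f. Proof. exact: sqrtr_ge0. Qed.

Lemma hnorm_tri f g : H f -> H g -> hnorm ip (fadd f g) <= hnorm ip f + hnorm ip g.
Proof.
move=> Hf Hg.
have h := Re_ip_le Hf Hg.
rewrite [X in X <= _]hnormE nq_add //.
rewrite -(ger0_norm (addr_ge0 (hnorm_ge0 f) (hnorm_ge0 g))) -sqrtr_sqr.
apply: ler_wsqrtr.
have ef : hnorm ip f ^+ 2 = nq f by rewrite hnormE sqr_sqrtr // nq_ge0.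
have eg : hnorm ip g ^+ 2 = nq g by rewrite hnormE sqr_sqrtr // nq_ge0.
rewrite sqrrD ef eg; lra.
Qed.


Lemma hnormZ a f : H f -> hnorm ip (fscale a f) = Normc.normc a * hnorm ip f.
Proof.
move=> Hf; rewrite !hnormE /nq (rk_ipZ RK _ Hf (rk_scale RK a Hf)) (ipZr _ Hf Hf) (ipff Hf).
case: a => x y /=; rewrite -sqrtrM ?addr_ge0 ?sqr_ge0 //; congr Num.sqrt.
rewrite /nq; ring.
Qed.

Lemma fsubE (f g : X -> R[i]) : fsub f g = fadd f (fscale (-1) g).
Proof. by apply: funext => x; rewrite /fsub /fadd /fscale mulN1r. Qed.

Lemma H_sub f g : H f -> H g -> H (fsub f g).
Proof. by move=> Hf Hg; rewrite fsubE; apply: (rk_add RK Hf (rk_scale RK _ Hg)). Qed.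

Lemma hnorm_subC f g : H f -> H g -> hnorm ip (fsub f g) = hnorm ip (fsub g f).
Proof.
move=> Hf Hg; have -> : fsub f g = fscale (-1) (fsub g f).
  by apply: funext => x; rewrite /fsub /fscale mulN1r opprB.
rewrite (hnormZ _ (H_sub Hg Hf)).
have -> : Normc.normc (-1 : R[i]) = 1.
  by rewrite /= oppr0 expr0n /= addr0 sqrrN expr1n sqrtr1.
by rewrite mul1r.
Qed.

Lemma hnorm0 : hnorm ip (@fzero R X) = 0.
Proof.
have -> : @fzero R X = fscale 0 (@fzero R X) by apply: funext => x; rewrite /fscale mul0r.
by rewrite (hnormZ _ (rk_zero RK)) Normc.normc0 mul0r.
Qed.

Lemma hnorm_gt0 v : H v -> v <> @fzero R X -> 0 < hnorm ip v.
Proof.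
move=> Hv nv; rewrite hnormE sqrtr_gt0 lt_def nq_ge0 // andbT.
apply/negP => /eqP h; apply: nv; apply: (rk_ip_eq0 RK Hv).
by rewrite ipff // h.
Qed.


Lemma normc_ge0 (z : R[i]) : 0 <= Normc.normc z.
Proof. by case: z => a b; exact: sqrtr_ge0. Qed.

Lemma spanN_mono (xs : nat -> X) M n v : (M <= n)%N -> spanN kf xs M v -> spanN kf xs n v.
Proof.
move=> le [c ->]; exists (fun j => if (j < M)%N then c j else 0).
apply: funext => y.
rewrite (big_ord_widen n (fun j => c j * kf (xs j) y) le) big_mkcond /=.
by apply: eq_bigr => i _; case: ifP => _; rewrite ?mul0r.
Qed.

Variables (F : X -> X) (xs : nat -> X) (eps : R).
Hypothesis core : is_core_adj H ip F (span_all kf xs).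

Lemma open_S0 z0 : (sigma_inf_on H ip F setT z0 < eps%:E)%E ->
  exists M r, 0 < r /\ forall n z, (M <= n)%N -> Normc.normc (z - z0) < r ->
   (sigma_inf_on H ip F (spanN kf xs n) z < eps%:E)%E.
Proof.
move=> /ereal_inf_lt [t [v [w [_ vn0 adj ->]]]].
rewrite lte_fin => rat.
case: (adj) => Hv Hw _.
set nv := hnorm ip v. have nvp : 0 < nv := hnorm_gt0 Hv vn0.
set A := hnorm ip (fsub w (fscale z0 v)).
have A0 : 0 <= A := hnorm_ge0 _.
have Alt : A < eps * nv by rewrite -ltr_pdivrMr.
set dl := eps * nv - A. have dlp : 0 < dl by rewrite subr_gt0.
set c0 := Normc.normc z0. have c00 : 0 <= c0 := normc_ge0 z0.
have epsp : 0 < eps.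
  have : 0 <= A / nv by rewrite divr_ge0 // ltW.
  move=> h; exact: le_lt_trans h rat.
set et := Num.min (nv/2) (dl / (4 * (eps + 1 + c0))).
have etp : 0 < et.
  by rewrite lt_min divr_gt0 //= divr_gt0 // mulr_gt0 //; lra.
have et1 : et <= nv / 2 by rewrite ge_min lexx.
have et2 : et <= dl / (4 * (eps + 1 + c0)) by rewrite ge_min lexx orbT.
have et2' : et * (4 * (eps + 1 + c0)) <= dl.
  by rewrite -ler_pdivlMr // mulr_gt0 //; lra.
have [v' [u' [spv adj' dv du]]] := core.2 v w adj et etp.
case: spv => M spM.
case: (adj') => Hv' Hu' _.
have lb : nv - et <= hnorm ip v'.
  have h := hnorm_tri Hv' (H_sub Hv Hv').
  have e : fadd v' (fsub v v') = v by apply: funext => x; rewrite /fadd /fsub; ring.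
  rewrite e (hnorm_subC Hv Hv') in h; rewrite /nv; lra.
have ub : hnorm ip v' <= nv + et.
  have h := hnorm_tri Hv (H_sub Hv' Hv).
  have e : fadd v (fsub v' v) = v' by apply: funext => x; rewrite /fadd /fsub; ring.
  rewrite e in h; rewrite /nv; lra.
have v'p : 0 < hnorm ip v' by lra.
have v'n0 : v' <> @fzero R X by move=> e; move: v'p; rewrite e hnorm0 ltxx.
exists M, (dl / (8 * nv)); split; first by rewrite divr_gt0 // mulr_gt0.
move=> n z Mn zr.
apply: (@le_lt_trans _ _ ((hnorm ip (fsub u' (fscale z v')) / hnorm ip v')%:E)).
  apply: ereal_inf_lbound; exists v', u'; split => //; exact: spanN_mono Mn spM.
rewrite lte_fin ltr_pdivrMr //.
have -> : fsub u' (fscale z v') = fadd (fadd (fadd (fsub w (fscale z0 v)) (fsub u' w))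
    (fscale z0 (fsub v v'))) (fscale (z0 - z) v').
  by apply: funext => x; rewrite /fadd /fsub /fscale; ring.
have H1 := H_sub Hw (rk_scale RK z0 Hv).
have H2 := H_sub Hu' Hw.
have H3 := rk_scale RK z0 (H_sub Hv Hv').
have H4 := rk_scale RK (z0 - z) Hv'.
have t1 := hnorm_tri (rk_add RK (rk_add RK H1 H2) H3) H4.
have t2 := hnorm_tri (rk_add RK H1 H2) H3.
have t3 := hnorm_tri H1 H2.
rewrite (hnormZ _ (H_sub Hv Hv')) (hnorm_subC Hv Hv') in t2.
rewrite (hnormZ _ Hv') in t1.
have s0 : 0 <= Normc.normc (z0 - z) := normc_ge0 _.
have s1 : Normc.normc (z0 - z) < dl / (8 * nv).
  by rewrite -opprB normcN.
have p1 : c0 * hnorm ip (fsub v' v) <= c0 * et.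
  by rewrite ler_wpM2l // ltW.
have p2 : Normc.normc (z0 - z) * hnorm ip v' <= dl / (8 * nv) * (nv + et).
  by apply: ler_pM => //; [exact: hnorm_ge0 | exact: ltW].
have p3 : dl / (8 * nv) * (nv + et) <= dl / 4.
  have -> : dl / (8 * nv) * (nv + et) = dl * ((nv + et) / (8 * nv)).
    by field; rewrite gt_eqF.
  have : (nv + et) / (8 * nv) <= 1 / 4.
    by rewrite ler_pdivrMr ?mulr_gt0 //; lra.
  move=> h; have := ler_wpM2l (ltW dlp) h; lra.
have p4 : eps * (nv - et) <= eps * hnorm ip v' by rewrite ler_wpM2l // ltW.
have dlE : dl = eps * nv - A by [].
have f1 : c0 * et + et + eps * et <= dl / 4.
  have : et * (4 * (eps + 1 + c0)) = 4 * (c0 * et + et + eps * et) by ring.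
  lra.
have f2 : eps * (nv - et) = eps * nv - eps * et by ring.
rewrite -/A in t3. rewrite -/c0 in t2. lra.
Qed.

End Hilb.

Lemma fin1 (Q : int -> nat -> Prop) :
  (forall a, exists N, forall n, (N <= n)%N -> Q a n) ->
  forall L : nat, exists N, forall a, -(L%:Z) <= a <= L%:Z -> forall n, (N <= n)%N -> Q a n.
Proof.
move=> h; elim=> [|L [N IH]].
  have [N hN] := h 0; exists N => a ha n hn.
  have -> : a = 0 by lia.
  exact: hN.
have [N1 h1] := h (L.+1%:Z); have [N2 h2] := h (- (L.+1%:Z)).
exists (maxn N (maxn N1 N2)) => a ha n hn.
have : (-(L%:Z) <= a <= L%:Z) \/ a = L.+1%:Z \/ a = - (L.+1%:Z) by lia.
case=> [hb|[->|->]].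
- apply: IH => //; lia.
- apply: h1; lia.
- apply: h2; lia.
Qed.

Lemma fin2 (P : int -> int -> nat -> Prop) :
  (forall a b, exists N, forall n, (N <= n)%N -> P a b n) ->
  forall L : nat, exists N, forall a b, -(L%:Z) <= a <= L%:Z -> -(L%:Z) <= b <= L%:Z ->
     forall n, (N <= n)%N -> P a b n.
Proof.
move=> h L.
have [N hN] := @fin1 (fun a n => forall b, -(L%:Z) <= b <= L%:Z -> P a b n)
   (fun a => let: ex_intro N hN := fin1 (h a) L in
      ex_intro _ N (fun n hn b hb => hN b hb n hn)) L.
exists N => a b ha hb n hn; exact: hN.
Qed.

Section Cplx.
Local Open Scope complex_scope.
Variable R : realType.

Lemma nrmC (z : R[i]) : `|z| = (Normc.normc z)%:C. Proof. by []. Qed.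

Lemma normc_le (z : R[i]) : Normc.normc z <= `|complex.Re z| + `|complex.Im z|.
Proof.
case: z => a b /=.
rewrite -(ger0_norm (addr_ge0 (normr_ge0 a) (normr_ge0 b))) -sqrtr_sqr.
apply: ler_wsqrtr.
have ha : `|a| ^+ 2 = a ^+ 2 by rewrite real_normK ?num_real.
have hb : `|b| ^+ 2 = b ^+ 2 by rewrite real_normK ?num_real.
rewrite sqrrD ha hb.
have : 0 <= `|a| * `|b| by rewrite mulr_ge0.
lra.
Qed.

Lemma approx (z : R[i]) (K : nat) : (0 < K)%N -> exists a b : int,
  [/\ a%:~R <= K%:R * complex.Re z < (a + 1)%:~R, b%:~R <= K%:R * complex.Im z < (b + 1)%:~R
    & Normc.normc (z - ((a%:~R / K%:R) +i* (b%:~R / K%:R))) <= 2 / K%:R].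
Proof.
move=> K0.
have Kp : 0 < (K%:R : R) by rewrite ltr0n.
exists (Num.floor (K%:R * complex.Re z)), (Num.floor (K%:R * complex.Im z)).
have ha := floor_itv (K%:R * complex.Re z).
have hb := floor_itv (K%:R * complex.Im z).
split => //.
apply: le_trans (normc_le _) _.
rewrite intrD in ha; rewrite intrD in hb.
case: z ha hb => x y /= ha hb.
set a := (Num.floor _)%:~R in ha *; set b := (Num.floor _)%:~R in hb *.
have E (u c : R) : c <= K%:R * u < c + 1%:~R -> `|u - c / K%:R| <= 1 / K%:R.
  move=> /andP[h1 h2]; rewrite (_ : 1%:~R = 1) // in h2.
  have -> : u - c / K%:R = (K%:R * u - c) / K%:R by field; rewrite gt_eqF.
  rewrite ger0_norm; last by rewrite divr_ge0 //; lra.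
  rewrite ler_pM2r ?invr_gt0 //; lra.
have := E _ _ ha; have := E _ _ hb.
move=> h1 h2 /=; have e2 : 2 / K%:R = 1 / K%:R + 1 / K%:R :> R by field; rewrite gt_eqF.
rewrite e2.
exact: lerD.
Qed.

Lemma grid_mem (n : nat) (a b : int) : (0 < n)%N ->
  @Normc.normc R ((a%:~R / n%:R) +i* (b%:~R / n%:R)) <= n%:R ->
  @grid R n ((a%:~R / n%:R) +i* (b%:~R / n%:R) : R[i]).
Proof.
move=> n0 hn; exists a, b; split; last first.
  by rewrite nrmC -(rmorph_nat (real_complex R)) lecR.
have nz : (n%:R : R[i]) != 0 by rewrite pnatr_eq0 -lt0n.
have nzR : (n%:R : R) != 0 by rewrite pnatr_eq0 -lt0n.
apply: (mulIf nz); rewrite divfK //.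
rewrite -(rmorph_nat (real_complex R)) -!(rmorph_int (real_complex R)).
apply/eqP; rewrite eq_complex /=; apply/andP; split; apply/eqP.
  by field.
by field.
Qed.
End Cplx.


Lemma pick_nat (R : realType) (x : R) : exists N : nat, x < N%:R.
Proof. exists (Num.bound `|x|); exact: le_lt_trans (ler_norm x) (archi_boundP (normr_ge0 x)). Qed.

Lemma Re_le (R : realType) (z : R[i]) : `|complex.Re z| <= Normc.normc z.
Proof.
case: z => x y /=; rewrite -sqrtr_sqr; apply: ler_wsqrtr.
have := sqr_ge0 y; lra.
Qed.

Lemma Im_le (R : realType) (z : R[i]) : `|complex.Im z| <= Normc.normc z.
Proof.
case: z => x y /=; rewrite -sqrtr_sqr; apply: ler_wsqrtr.
have := sqr_ge0 x; lra.
Qed.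

Lemma normc_tri (R : realType) (x y z : R[i]) :
  Normc.normc (x - z) <= Normc.normc (x - y) + Normc.normc (y - z).
Proof.
have -> : x - z = (x - y) + (y - z) by rewrite addrA subrK.
exact: le_normcD.
Qed.

Lemma normc_sym (R : realType) (x y : R[i]) : Normc.normc (x - y) = Normc.normc (y - x).
Proof. by rewrite -opprB normcN. Qed.

Theorem mainTheorem3 (R : realType) (X : Type) (H : set (X -> R[i]))
  (ip : (X -> R[i]) -> (X -> R[i]) -> R[i]) (kf : X -> X -> R[i])
  (F : X -> X) (xs : nat -> X) (eps : R) :
  is_RKHS H ip kf ->
  densely_defined H ip (koopman_dom H F) ->
  is_core_adj H ip F (span_all kf xs) ->
  0 < eps ->
  (forall N : nat, Gamma_adj H ip kf F xs eps N `<=` Sp_ap_adj H ip F eps) /\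
  AW_converges (Gamma_adj H ip kf F xs eps) (Sp_ap_adj H ip F eps).
Proof.
move=> RK dd core eps0.
have part1 : forall N : nat, Gamma_adj H ip kf F xs eps N `<=` Sp_ap_adj H ip F eps.
  move=> N z [_ hz] d d0; exists z; split.
    apply: le_lt_trans hz; apply: ereal_inf_le_tmp.
    by move=> t [v [w [Sv vn adj ->]]]; exists v, w; split.
  by rewrite subrr normr0 ltcR.
split => // d m d0.
have [K hK] := pick_nat (16 / d).
have Kp : (0 : R) < K%:R by apply: lt_trans hK; rewrite divr_gt0.
have K0 : (0 < K)%N by rewrite -(ltr0n R).
have hK' : 2 / K%:R <= d / 8.
  rewrite ler_pdivrMr // -ler_pdivrMl; last by rewrite divr_gt0.
  have -> : (d / 8)^-1 * 2 = 16 / d by field; rewrite gt_eqF.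
  exact: ltW.
set L := (K * m + 1)%N.
pose P := fun (a b : int) (n : nat) => forall z, Sp_ap_adj H ip F eps z ->
   Normc.normc (z - (((a%:~R / K%:R) +i* (b%:~R / K%:R))%C)) <= 2 / K%:R ->
   exists w, Gamma_adj H ip kf F xs eps n w /\ `|z - w| <= (d%:C)%C.
have key : forall a b : int, exists N, forall n, (N <= n)%N -> P a b n.
  move=> a b; rewrite /P; set p := ((a%:~R / K%:R) +i* (b%:~R / K%:R))%C.
  case: (pselect (exists z0, (sigma_inf_on H ip F setT z0 < eps%:E)%E /\
                    Normc.normc (z0 - p) < d / 4)) => [[z0 [hz0 hz0p]]|nP].
  - have [M [r [r0 hr]]] := open_S0 RK core hz0.
    have [N1 h1] := pick_nat (2 / r).
    have [N2 h2] := pick_nat (8 / d).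
    have [N3 h3] := pick_nat (Normc.normc z0 + 2).
    exists (maxn M (maxn N1 (maxn N2 N3))).+1 => n hn z _ hzp.
    have n0 : (0 < n)%N by apply: leq_trans hn.
    have np : (0 : R) < n%:R by rewrite ltr0n.
    have hmax : (maxn M (maxn N1 (maxn N2 N3)) <= n)%N := ltnW hn.
    move: hmax; rewrite !geq_max => /andP[hMn /andP[hN1 /andP[hN2 hN3]]].
    rewrite -(ler_nat R) in hN1; rewrite -(ler_nat R) in hN2; rewrite -(ler_nat R) in hN3.
    have [a' [b' [_ _ hab]]] := approx z0 n0.
    set w := ((a'%:~R / n%:R) +i* (b'%:~R / n%:R))%C in hab *.
    have e1 : 2 / n%:R < r.
      rewrite ltr_pdivrMr //; rewrite ltr_pdivrMr // in h1.
      have := ler_wpM2r (ltW r0) hN1; lra.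
    have e2 : 2 / n%:R < d / 4.
      rewrite ltr_pdivrMr //; rewrite ltr_pdivrMr // in h2.
      have := ler_wpM2r (ltW d0) hN2; lra.
    have e3 : (2 / n%:R : R) <= 2.
      rewrite ler_pdivrMr //; have : (1 : R) <= n%:R by rewrite ler1n.
      lra.
    have hwz : Normc.normc (w - z0) <= 2 / n%:R by rewrite normc_sym.
    exists w; split.
      split.
        apply: grid_mem => //.
        have := le_normcD z0 (w - z0); rewrite addrC subrK; lra.
      apply: hr => //; lra.
    rewrite nrmC lecR.
    have := normc_tri z p w; have := normc_tri p z0 w; rewrite (normc_sym p z0).
    lra.
  - exists 0%N => n _ z hz hzp; exfalso; apply: nP.
    have d8 : 0 < d / 8 by rewrite divr_gt0.
    have [z0 [hz0 hzz0]] := hz _ d8.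
    exists z0; split => //.
    rewrite nrmC ltcR in hzz0.
    have := normc_tri z0 z p; rewrite (normc_sym z0 z); lra.
have [N0 hN0] := @fin2 P key L.
exists N0 => n hn; split.
  move=> z hz _; exists z; split; first exact: part1 hz.
  by rewrite subrr normr0 lecR ltW.
move=> z hz hzm.
have [a [b [ha hb hab]]] := approx z K0.
rewrite nrmC -(rmorph_nat (real_complex R)) lecR in hzm.
have hL : (L%:R : R) = K%:R * m%:R + 1 by rewrite /L natrD natrM mulr1n.
have box : forall (c : int) (x : R), c%:~R <= K%:R * x < (c + 1)%:~R ->
    `|x| <= m%:R -> -(L%:Z) <= c <= L%:Z.
  move=> c x /andP[c1 c2] hx; rewrite intrD in c2.
  have hx2 := ler_norml x m%:R; rewrite hx in hx2.
  have [hx3 hx4] : - m%:R <= x /\ x <= m%:R by move/esym/andP: hx2.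
  have y1 : K%:R * x <= K%:R * m%:R by rewrite ler_wpM2l // ltW.
  have y2 : K%:R * - m%:R <= K%:R * x by rewrite ler_wpM2l // ltW.
  apply/andP; split; rewrite -(@ler_int R).
    rewrite rmorphN /= -[(L%:Z)%:~R]/(L%:R : R) hL; rewrite (_ : 1%:~R = 1) // in c2; lra.
  rewrite -[(L%:Z)%:~R]/(L%:R : R) hL; lra.
exact: (hN0 a b (box _ _ ha (le_trans (Re_le z) hzm)) (box _ _ hb (le_trans (Im_le z) hzm)) n hn z hz hab).
Qed.
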